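(* Let $U\subseteq X$ be open and $A\subseteq U$ closed. Then for every $x\in X$, $$\varepsilon_x^{A\cup (X\setminus U)}(U)\ \ge\ \|\varepsilon_x^A\|-\sup_{z\in X\setminus U}\|\varepsilon_z^A\|.$$
   Context: $(X,\rho)$ is a separable metric space; $\mathcal M(X)$ the finite Borel measures (extended to universally measurable sets), $\|\mu\|:=\mu(X)$, $\varepsilon_x$ the Dirac measure. For every open $U\subseteq X$ and $x\in X$ a measure $\mu_x^U\in\mathcal M(X)$ is given such that for all open $U,V$ and all $x$: $\mu_x^U(U)=0$, $\|\mu_x^U\|\le1$, $\mu_x^U=\varepsilon_x$ if $x\notin U$; $y\mapsto\mu_y^U(E)$ is universally measurable for every Borel $E$; and $\mu_x^U=\int\mu_y^U\,d\mu_x^V(y)$ whenever $V\subseteq U$. For closed $A\subseteq X$, $\varepsilon_x^A:=\mu_x^{X\setminus A}$. *)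

(* Defs.v *)
From HB Require Import structures.
From mathcomp Require Import all_boot all_order all_algebra.
From mathcomp Require Import all_classical all_reals all_analysis measurable_realfun.

Set Implicit Arguments.
Unset Strict Implicit.
Unset Printing Implicit Defensive.

Import Order.TTheory GRing.Theory Num.Theory.
Local Open Scope classical_set_scope.
Local Open Scope ring_scope.

(* A metric space with a distinguished point (needed by MathComp-Analysis to
   build measurable types; harmless since the theorem quantifies over x : X). *)
#[short(type="pmetricType")]
HB.structure Definition PointedMetric (K : numDomainType) :=
  { M of Pointed M & Metric K M }.

Definition Borel (R : realType) (X : pmetricType R) :=
  g_sigma_algebraType (@open X).

Definition separable_space (R : realType) (X : pmetricType R) : Prop :=
  exists D : set X, countable D /\ closure D = setT.

Notation FinMeas R X := {finite_measure set (Borel X) -> \bar R}.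

Definition univ_measurable_set (R : realType) (X : pmetricType R)
    (A : set X) : Prop :=
  forall nu : FinMeas R X, completed_algebra_gen nu (A : set (Borel X)).

Definition univ_measurable_fun (R : realType) (X : pmetricType R)
    (f : X -> \bar R) : Prop :=
  forall B : set \bar R, measurable B -> univ_measurable_set (f @^-1` B).

(* The standing hypotheses on the family U, x |-> mu_x^U  (here mu U x). *)
Definition balayage_family (R : realType) (X : pmetricType R)
    (mu : set X -> X -> FinMeas R X) : Prop :=
  [/\ (forall U x, open U -> mu U x U = 0%E),
      (forall U x, open U -> (mu U x setT <= 1)%E),
      (forall U x, open U -> ~ U x ->
         forall E : set (Borel X), measurable E -> mu U x E = \d_(x : Borel X) E),
      (forall U (E : set (Borel X)), open U -> measurable E ->
         univ_measurable_fun (fun y => mu U y E)) &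
      (forall U V x, open U -> open V -> V `<=` U ->
         forall E : set (Borel X), measurable E ->
           mu U x E =
           (\int[@completed_measure_extension _ _ _ (mu V x)]_y mu U y E)%E)].

Definition eps (R : realType) (X : pmetricType R)
    (mu : set X -> X -> FinMeas R X) (A : set X) (x : X) : FinMeas R X :=
  mu (~` A) x.

Definition mass (R : realType) (X : pmetricType R) (nu : FinMeas R X) : \bar R :=
  nu setT.

(* Main.v *)
Require Import Defs.
From HB Require Import structures.
From mathcomp Require Import all_boot all_order all_algebra.
From mathcomp Require Import all_classical all_reals all_analysis measurable_realfun.

Local Open Scope classical_set_scope.
Local Open Scope ring_scope.

Import Order.TTheory GRing.Theory Num.Theory.

Lemma calg_cara (R : realType) (X : pmetricType R) (nu : FinMeas R X)
  (A : set (Borel X)) :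
  completed_algebra_gen nu A -> (nu^*)%mu.-cara.-measurable A.
Proof.
move=> [B mB [N [M [mM M0 NM]]] <-].
apply: measurableU.
  exact: caratheodory_measurable_mu_ext.
apply: le_caratheodory_measurable => Y.
have N0 : (nu^*)%mu N = 0%E.
  apply/eqP; rewrite eq_le outer_measure_ge0 andbT.
  by rewrite -M0 -(measurable_mu_extE nu mM) le_outer_measure.
apply: (@le_trans _ _ ((nu^*)%mu N + (nu^*)%mu (Y `&` ~` N)))%E.
  by rewrite leeD2r// le_outer_measure//; exact: subIsetr.
by rewrite N0 add0e le_outer_measure//; exact: subIsetl.
Qed.

Theorem lemma4p8 (R : realType) (X : pmetricType R)
    (mu : set X -> X -> FinMeas R X) :
  separable_space X ->
  balayage_family mu ->
  forall (U A : set X), open U -> closed A -> A `<=` U ->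
  forall x : X,
    (eps mu (A `|` ~` U) x U >=
     mass (eps mu A x) -
     (sup [set fine (mass (eps mu A z)) | z in ~` U])%:E)%E.
Proof.
move=> _ [H0 H1 H2 H3 H4] U A oU cA AU x.
rewrite /eps /mass.
set S := [set fine (mu (~` A) z setT) | z in ~` U].
set s := sup S.
set V := ~` (A `|` ~` U).
have oV : open V by rewrite /V openC; apply: closedU => //; rewrite closedC.
have oW : open (~` A) by rewrite openC.
have VW : V `<=` ~` A by move=> y /= /not_orP [].
have mfin z : (mu (~` A) z setT)%E \is a fin_num by apply: fin_num_measure.
have Sub : has_ubound S.
  exists 1 => _ [z _ <-]; rewrite -lee_fin fineK //; exact: H1.
have s0 : 0 <= s.
  have [[z Uz]|nz] := pselect (exists z, (~` U) z).
    apply: le_trans (ub_le_sup Sub (ex_intro2 _ _ z Uz erefl)).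
    by rewrite fine_ge0.
  have S0 : S = set0 by apply/seteqP; split => // r [z Uz _]; apply: nz; exists z.
  by rewrite /s S0 sup0.
have E := H4 (~` A) V x oW oV VW setT measurableT.
set m := @completed_measure_extension _ _ _ (mu V x) in E.
have mf : measurable_fun (setT : set (caratheodory_type (mu V x)^*%mu)) (fun y : X => mu (~` A) y setT).
  move=> _ B mB; rewrite setTI; apply: calg_cara.
  exact: (H3 _ _ oW measurableT B mB (mu V x)).
have mUB : measurable (U : set (Borel X)) by apply: sub_sigma_algebra.
have mU : measurable (U : set (caratheodory_type (mu V x)^*%mu)).
  exact: caratheodory_measurable_mu_ext.
have le1 : (\int[m]_y mu (~` A) y setT <=
    \int[m]_y ((\1_U y)%:E + s%:E))%E.
  apply: ge0_le_integral => //.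
  - apply: emeasurable_funD; last exact: measurable_cst.
    by apply/measurable_EFinP; exact: measurable_indic.
  - move=> y _; have [Uy|nUy] := pselect (U y).
      rewrite indicE mem_set //; apply: (le_trans (H1 _ _ oW)).
      by rewrite leeDl // lee_fin.
    rewrite indicE memNset // add0e -(fineK (mfin y)) lee_fin.
    by apply: ub_le_sup => //; exists y.
have eqI : (\int[m]_y ((\1_U y)%:E + s%:E) = m U + s%:E * m setT)%E.
  rewrite ge0_integralD //; try (by move=> y _; rewrite lee_fin);
    try (by apply/measurable_EFinP; exact: measurable_indic);
    try exact: measurable_cst.
  by rewrite integral_indic // setIT integral_cst.
have mUe : m U = mu V x U by exact: (measurable_mu_extE (mu V x) mUB).
have mTe : m setT = mu V x setT by exact: (measurable_mu_extE (mu V x) measurableT).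
rewrite E leeBlDr //.
apply: (le_trans le1); rewrite eqI mUe mTe leeD2l ?fin_num_measure // muleC.
apply: gee_pMl; first by rewrite fin_num_measure.
- by rewrite lee_fin.
- exact: H1.
Qed.
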